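(* In the truncated Gale–Shapley algorithm described in the context, with a weight function $w$ respecting the preferences, for every $i\ge 2$ we have $w(L_i)\ge (i-1)\,f_i(R)$.
   Context: Instance: a simple bipartite graph $\mathcal{G}=(R\cup B,E)$ (red nodes $R$, blue nodes $B$) without isolated nodes, each node having a linear preference order on its neighbours. Algorithm (distributed Gale–Shapley): each blue $b$ keeps $p(b)$ (current partner or $\bot$), initially $\bot$. Each red $r$ keeps a list $C(r)$, initially all neighbours in decreasing preference; $c(r)$ (candidate awaiting response, or $\bot$), initially $\bot$; $p(r)$ (partner or $\bot$), initially $\bot$. Each round consists of a blue turn then a red turn. Blue turn, for each $b$: let $P$ be the set of neighbours that sent `propose'; if $P=\emptyset$ do nothing. Otherwise let $Q=P\cup\{p(b)\}$ if $p(b)\ne\bot$, else $Q=P$; let $q$ be $b$'s most preferred node in $Q$; if $q\ne p(b)$, send `break' to $p(b)$ (if $p(b)\ne\bot$), send `accept' to $q$, and set $p(b)\gets q$; send `reject' to every $r\in P\setminus\{q\}$. Red turn, for each $r$: (1) if $c(r)\neq\bot$, receive the message from $c(r)$; if `accept' set $p(r)\gets c(r)$; if `reject' remove $c(r)$ from $C(r)$; then set $c(r)\gets\bot$. (2) If $p(r)\ne\bot$ and $p(r)$ sent `break', remove $p(r)$ from $C(r)$ and set $p(r)\gets\bot$. (3) If $p(r)=\bot$ and $C(r)$ is nonempty, set $c(r)$ to the first element of $C(r)$ and send `propose' to it. Notation: a subscript $i$ denotes the value at the end of round $i$. An edge $\{r,b\}$ is lost when $r$ removes $b$ from $C(r)$;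 $L_i\subseteq E$ is the set of edges lost by the end of round $i$. Let $w:E\to\mathbb{Z}_{>0}$ be a weight function respecting preferences: whenever a node $v$ prefers $x$ over $y$, $w(\{v,x\})\ge w(\{v,y\})$; $w(F)=\sum_{e\in F}w(e)$. The potential of $r\in R$ at the end of round $i$ is $f_i(r)=0$ if $r$ is matched ($p_i(r)\neq\bot$) or $C_i(r)$ is empty, and otherwise $f_i(r)=w(\{r,b\})$ where $b$ is the first element of $C_i(r)$; $f_i(R)=\sum_{r\in R}f_i(r)$. *)

(* Defs.v *)
From mathcomp Require Import all_boot.
Set Implicit Arguments. Unset Strict Implicit. Unset Printing Implicit Defensive.

Section GaleShapley.
Variables (R B : finType).
Variable adj : R -> B -> bool.
(* prefR r : neighbours of r in decreasing preference;
   prefB b : neighbours of b in decreasing preference *)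
Variable prefR : R -> seq B.
Variable prefB : B -> seq R.

Definition prefersR (r : R) (x y : B) := index x (prefR r) < index y (prefR r).
Definition prefersB (b : B) (x y : R) := index x (prefB b) < index y (prefB b).

Definition valid_instance : Prop :=
  [/\ (forall r, exists b, adj r b),
      (forall b, exists r, adj r b),
      (forall r, uniq (prefR r) /\ forall b, (b \in prefR r) = adj r b)
    & (forall b, uniq (prefB b) /\ forall r, (r \in prefB b) = adj r b)].

Definition respects_prefs (w : R -> B -> nat) : Prop :=
  [/\ (forall r b, adj r b -> 0 < w r b),
      (forall r x y, adj r x -> adj r y -> prefersR r x y -> w r y <= w r x)
    & (forall b x y, adj x b -> adj y b -> prefersB b x y -> w y b <= w x b)].

Record state := State {
  pb : B -> option R;
  cand : R -> option B;
  pr : R -> option B;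
  Cl : R -> seq B
}.

Definition init : state :=
  State (fun _ => None) (fun _ => None) (fun _ => None) prefR.

(* ---- blue turn (uses proposals sent in the previous red turn, i.e.
   c(r) at the end of the previous round) ---- *)
Definition has_prop (s : state) (b : B) := [exists r, cand s r == Some b].

Definition bchoice (s : state) (b : B) : option R :=
  ohead [seq r <- prefB b | (cand s r == Some b) || (pb s b == Some r)].

Definition switches (s : state) (b : B) :=
  [&& has_prop s b, bchoice s b != None & bchoice s b != pb s b].

Definition msg_accept (s : state) (b : B) (r : R) :=
  switches s b && (bchoice s b == Some r).
Definition msg_break (s : state) (b : B) (r : R) :=
  switches s b && (pb s b == Some r).
Definition msg_reject (s : state) (b : B) (r : R) :=
  (cand s r == Some b) && (bchoice s b != Some r).

Definition new_pb (s : state) (b : B) : option R :=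
  if switches s b then bchoice s b else pb s b.

Definition red_step1 (s : state) (r : R) : option B * seq B :=
  match cand s r with
  | Some b => (if msg_accept s b r then Some b else pr s r,
               if msg_reject s b r then filter (predC1 b) (Cl s r) else Cl s r)
  | None => (pr s r, Cl s r)
  end.

Definition red_step2 (s : state) (r : R) : option B * seq B :=
  let pc := red_step1 s r in
  match pc.1 with
  | Some b' => if msg_break s b' r then (None, filter (predC1 b') pc.2) else pc
  | None => pc
  end.

Definition new_pr (s : state) (r : R) := (red_step2 s r).1.
Definition new_C (s : state) (r : R) := (red_step2 s r).2.
Definition new_cand (s : state) (r : R) : option B :=
  if new_pr s r == None then ohead (new_C s r) else None.

Definition round (s : state) : state :=
  State (new_pb s) (new_cand s) (new_pr s) (new_C s).

(* state at the end of round i (round 0 = initial state) *)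
Definition st (i : nat) : state := iter i round init.

Definition lost (i : nat) : {set R * B} :=
  [set e | (e.2 \in Cl init e.1) && (e.2 \notin Cl (st i) e.1)].

Definition wset (w : R -> B -> nat) (F : {set R * B}) : nat :=
  \sum_(e in F) w e.1 e.2.

Definition pot (w : R -> B -> nat) (i : nat) (r : R) : nat :=
  match pr (st i) r, Cl (st i) r with
  | None, b :: _ => w r b
  | _, _ => 0
  end.

Definition potR (w : R -> B -> nat) (i : nat) : nat := \sum_(r : R) pot w i r.

End GaleShapley.

(* Main.v *)
Require Import Defs.
From mathcomp Require Import all_boot.
Set Implicit Arguments. Unset Strict Implicit. Unset Printing Implicit Defensive.

Lemma ohead_mem (T : eqType) (s : seq T) x : ohead s = Some x -> x \in s.
Proof. by case: s => //= y s [->]; rewrite mem_head. Qed.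

Lemma index_subseq (T : eqType) (p C : seq T) x y :
  uniq p -> subseq (x :: C) p -> y \in C -> index x p < index y p.
Proof.
elim: p => [|z p IH] //= /andP[zp up].
case: (x =P z) => [xz|xz].
  subst z; rewrite eqxx => Hs yC.
  have yp : y \in p by apply: (mem_subseq Hs).
  case: (x =P y) => [xy|//]; subst; by rewrite yp in zp.
move=> Hs yC.
have yp : y \in p.
  by apply: (mem_subseq Hs); rewrite inE yC orbT.
have -> : (z == x) = false by apply/eqP => zx; apply: xz.
case: (z =P y) => [yz|_]; first by subst; rewrite yp in zp.
by rewrite ltnS IH.
Qed.

Lemma index_filter_head (T : eqType) (P : pred T) (s : seq T) x y :
  ohead (filter P s) = Some x -> y \in s -> P y -> y != x -> index x s < index y s.
Proof.
elim: s => [|z s IH] //=.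
case Pz: (P z) => /=.
  move=> [<-]; rewrite eqxx inE => /orP[/eqP->|ys] Py; first by rewrite eqxx.
  by move=> yz; rewrite eq_sym (negbTE yz).
move=> H; rewrite inE => /orP[/eqP->|ys] Py; first by rewrite Py in Pz.
have xs : x \in filter P s by apply: ohead_mem.
rewrite mem_filter in xs; case/andP: xs => Px _.
have xz : (z == x) = false by apply/eqP=> zx; rewrite zx Px in Pz.
have yz : (z == y) = false by apply/eqP=> zy; rewrite zy Py in Pz.
by rewrite xz yz ltnS; apply: IH.
Qed.
Section Algo.
Variables (R B : finType) (adj : R -> B -> bool) (prefR : R -> seq B) (prefB : B -> seq R).

Definition Inv (s : state R B) :=
  [/\ (forall r b, cand s r = Some b -> pr s r = None /\ ohead (Cl s r) = Some b),
      (forall r b, pr s r = Some b -> ohead (Cl s r) = Some b),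
      (forall r, subseq (Cl s r) (prefR r))
    & (forall r b, (pb s b == Some r) = (pr s r == Some b))].

Lemma Inv_init : Inv (init prefR).
Proof. by split => //= r; apply: subseq_refl. Qed.

Lemma bchoice_spec s b r : bchoice prefB s b = Some r ->
  ((cand s r == Some b) || (pb s b == Some r)) && (r \in prefB b).
Proof. by move/ohead_mem; rewrite mem_filter. Qed.

Lemma newC_sub s r : subseq (new_C prefB s r) (Cl s r).
Proof.
rewrite /new_C /red_step2 /red_step1.
case: (cand s r) => [b|] /=.
  case: (msg_reject prefB s b r).
    case: (if msg_accept prefB s b r then Some b else pr s r) => [b'|] /=.
      case: (msg_break _ _ _ _) => /=; last by apply: filter_subseq.
      exact: (subseq_trans (filter_subseq _ _) (filter_subseq _ _)).
    by apply: filter_subseq.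
  case: (if msg_accept prefB s b r then Some b else pr s r) => [b'|] /=.
    case: (msg_break _ _ _ _) => /=; last by apply: subseq_refl.
    by apply: filter_subseq.
  by apply: subseq_refl.
case: (pr s r) => [b'|] /=; last by apply: subseq_refl.
case: (msg_break _ _ _ _) => /=; last by apply: subseq_refl.
by apply: filter_subseq.
Qed.

Lemma step_cand s r b0 : Inv s -> cand s r = Some b0 ->
  new_pr prefB s r = (if msg_accept prefB s b0 r then Some b0 else None) /\
  new_C prefB s r = (if msg_accept prefB s b0 r then Cl s r
                     else filter (predC1 b0) (Cl s r)).
Proof.
case=> H1 H2 H3 H4 Hc; have [Hp Hh] := H1 _ _ Hc.
rewrite /new_pr /new_C /red_step2 /red_step1 Hc Hp.
have Hpb : (pb s b0 == Some r) = false by rewrite H4 Hp.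
case Ha: (msg_accept prefB s b0 r).
  have Hrj : msg_reject prefB s b0 r = false.
    by move: Ha; rewrite /msg_accept /msg_reject => /andP[_ /eqP ->]; rewrite eqxx andbF.
  by rewrite Hrj /= /msg_break Hpb andbF.
have Hrj : msg_reject prefB s b0 r.
  rewrite /msg_reject Hc eqxx /=; apply/negP => /eqP Hb.
  have Hpb' : (Some r == pb s b0) = false by rewrite eq_sym.
  have Hhp : has_prop s b0 by apply/existsP; exists r; rewrite Hc.
  by move: Ha; rewrite /msg_accept /switches Hb eqxx Hhp Hpb'.
by rewrite Hrj.
Qed.

Lemma step_pr s r b' : Inv s -> cand s r = None -> pr s r = Some b' ->
  new_pr prefB s r = (if switches prefB s b' then None else Some b') /\
  new_C prefB s r = (if switches prefB s b' then filter (predC1 b') (Cl s r)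
                     else Cl s r).
Proof.
case=> H1 H2 H3 H4 Hc Hp.
rewrite /new_pr /new_C /red_step2 /red_step1 Hc Hp /= /msg_break.
have -> : pb s b' == Some r by rewrite H4 Hp.
by rewrite andbT; case: (switches _ _ _).
Qed.

Lemma step_none s r : cand s r = None -> pr s r = None ->
  new_pr prefB s r = None /\ new_C prefB s r = Cl s r.
Proof. by move=> Hc Hp; rewrite /new_pr /new_C /red_step2 /red_step1 Hc Hp. Qed.

End Algo.
Section Algo2.
Variables (R B : finType) (adj : R -> B -> bool) (prefR : R -> seq B) (prefB : B -> seq R).

Lemma sw_cand s b r : switches prefB s b -> bchoice prefB s b = Some r -> cand s r = Some b.
Proof.
move=> Sw Hb; case/andP: (bchoice_spec Hb) => /orP[/eqP//|/eqP Hpb] _.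
by move: Sw; rewrite /switches Hb Hpb eqxx !andbF.
Qed.

Lemma Inv_round s : Inv prefR s -> Inv prefR (round prefB s).
Proof.
move=> Hinv; case: (Hinv) => H1 H2 H3 H4; split => /=.
- by move=> r b; rewrite /new_cand; case: eqP => // -> ->.
- move=> r b; case Hc: (cand s r) => [b0|].
    have [Ep EC] := step_cand prefB Hinv Hc; rewrite Ep EC.
    have [_ Hh] := H1 _ _ Hc.
    by case: (msg_accept _ _ _ _) => // -[<-].
  case Hp: (pr s r) => [b'|].
    have [Ep EC] := step_pr prefB Hinv Hc Hp; rewrite Ep EC.
    by case: (switches _ _ _) => // -[<-]; apply: H2.
  by have [-> _] := step_none prefB Hc Hp.
- by move=> r; apply: subseq_trans (newC_sub _ _ _) (H3 r).
move=> r b; rewrite /new_pb.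
case Hc: (cand s r) => [b0|].
  have [Hp _] := H1 _ _ Hc.
  rewrite (step_cand prefB Hinv Hc).1.
  case Ha: (msg_accept prefB s b0 r); last first.
    case Sb: (switches prefB s b).
      apply/eqP => Hbr; have := sw_cand Sb Hbr; rewrite Hc => -[Eb]; subst b.
      by rewrite /msg_accept Sb Hbr eqxx in Ha.
    by rewrite H4 Hp.
  move: (Ha) => /andP[Sb0 /eqP Hb0].
  case: (b0 =P b) => [<-|nb]; first by rewrite Sb0 Hb0 !eqxx.
  have -> : (Some b0 == Some b) = false by apply/eqP => -[].
  case Sb: (switches prefB s b).
    apply/eqP => Hbr; have := sw_cand Sb Hbr; rewrite Hc => -[Eb]; by apply: nb.
  by rewrite H4 Hp.
case Hp: (pr s r) => [b'|].
  rewrite (step_pr prefB Hinv Hc Hp).1.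
  case: (b' =P b) => [Eb|nb].
    subst b'; case Sb: (switches prefB s b).
      apply/eqP => Hbr; have := sw_cand Sb Hbr; by rewrite Hc.
    by rewrite H4 Hp.
  have -> : ((if switches prefB s b' then None else Some b') == Some b) = false.
    by case: (switches _ _ _) => //; apply/eqP => -[].
  case Sb: (switches prefB s b).
    apply/eqP => Hbr; have := sw_cand Sb Hbr; by rewrite Hc.
  rewrite H4 Hp; by apply/eqP => -[].
rewrite (step_none prefB Hc Hp).1.
case Sb: (switches prefB s b).
  apply/eqP => Hbr; have := sw_cand Sb Hbr; by rewrite Hc.
by rewrite H4 Hp.
Qed.

End Algo2.
Section Weights.
Variables (R B : finType) (adj : R -> B -> bool) (prefR : R -> seq B) (prefB : B -> seq R).
Variable w : R -> B -> nat.
Hypothesis Hv : valid_instance adj prefR prefB.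
Hypothesis Hw : respects_prefs adj prefR prefB w.

Lemma adjR r b : b \in prefR r -> adj r b.
Proof. by case: Hv => _ _ /(_ r) [_ ->] _. Qed.
Lemma adjB r b : r \in prefB b -> adj r b.
Proof. by case: Hv => _ _ _ /(_ b) [_ ->]. Qed.
Lemma adjBR r b : adj r b -> r \in prefB b.
Proof. by case: Hv => _ _ _ /(_ b) [_ ->]. Qed.

Lemma wred C r x y : subseq C (prefR r) -> ohead C = Some x -> y \in C -> w r y <= w r x.
Proof.
case: C => [|z C] //= Hs [Ez]; subst z.
rewrite inE; case: (y =P x) => [->//|nyx] /= yC.
have uR : uniq (prefR r) by case: Hv => _ _ /(_ r) [].
have Hi := index_subseq uR Hs yC.
case: Hw => _ /(_ r x y) H _; apply: H => //; apply: adjR.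
  by apply: (mem_subseq Hs); rewrite mem_head.
by apply: (mem_subseq Hs); rewrite inE yC orbT.
Qed.

Lemma wblue s b r r' : bchoice prefB s b = Some r' -> adj r b -> pb s b == Some r ->
  r != r' -> w r b <= w r' b.
Proof.
move=> Hb Ar Hpb nr.
have Hi := index_filter_head Hb (adjBR Ar) (introT orP (or_intror Hpb)) nr.
case/andP: (bchoice_spec Hb) => _ r'b.
by case: Hw => _ _ /(_ b r' r) H; apply: H => //; apply: adjB.
Qed.

Definition potS (s : state R B) r :=
  match pr s r, Cl s r with
  | None, b :: _ => w r b
  | _, _ => 0
  end.

Definition Cand (s : state R B) := forall r, cand s r = (if pr s r == None then ohead (Cl s r) else None).

Lemma hd_w C r x : ohead C = Some x -> match C with b :: _ => w r b | _ => 0 end = w r x.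
Proof. by case: C => //= z C [->]. Qed.

Lemma hl2 C r x : subseq C (prefR r) -> ohead C = Some x ->
  match filter (predC1 x) C with y :: _ => w r y | [::] => 0 end <= w r x.
Proof.
move=> Hs Hh; case E: (filter _ _) => [|y t] //.
apply: (wred Hs Hh).
have : y \in filter (predC1 x) C by rewrite E mem_head.
by rewrite mem_filter => /andP[].
Qed.

Lemma hl C r x : subseq C (prefR r) -> ohead C = Some x ->
  match filter (predC1 x) C with y :: _ => w r y | [::] => 0 end <=
  \sum_b (if (b \in C) && (b \notin filter (predC1 x) C) then w r b else 0).
Proof.
move=> Hs Hh; rewrite (bigD1 x) //=.
have -> : (x \in C) && (x \notin filter (predC1 x) C).
  by rewrite (ohead_mem Hh) mem_filter /= eqxx.
by apply: leq_trans (leq_addr _ _); apply: hl2.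
Qed.

Lemma loss s r : Inv prefR s -> Cand s ->
  potS (round prefB s) r <=
  \sum_b (if (b \in Cl s r) && (b \notin new_C prefB s r) then w r b else 0).
Proof.
move=> Hinv Hcand; case: (Hinv) => H1 H2 H3 H4.
case Hc: (cand s r) => [b0|].
  have [Hp Hh] := H1 _ _ Hc.
  have [Ep EC] := step_cand prefB Hinv Hc.
  rewrite /potS /= Ep EC; case: (msg_accept _ _ _ _) => //.
  exact: hl.
case Hp: (pr s r) => [b'|].
  have [Ep EC] := step_pr prefB Hinv Hc Hp.
  rewrite /potS /= Ep EC; case: (switches _ _ _) => //.
  by apply: hl => //; apply: H2.
have [Ep EC] := step_none prefB Hc Hp.
have := Hcand r; rewrite Hc Hp /= => Hh.
by rewrite /potS /= Ep EC; case: (Cl s r) Hh.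
Qed.

Definition gmap (s : state R B) r :=
  match pr s r with Some b' => odflt r (bchoice prefB s b') | None => r end.

Lemma accepted_zero s r b : Inv prefR s -> cand s r = Some b -> switches prefB s b ->
  bchoice prefB s b = Some r -> potS (round prefB s) r = 0.
Proof.
move=> Hinv Hc Sb Hb; have [Ep _] := step_cand prefB Hinv Hc.
by rewrite /potS /= Ep /msg_accept Sb Hb eqxx.
Qed.

Lemma gspec s r : Inv prefR s -> Cand s -> 0 < potS (round prefB s) r ->
  (pr s r = None /\ potS (round prefB s) r <= potS s r) \/
  (exists b', [/\ pr s r = Some b', switches prefB s b', bchoice prefB s b' = Some (gmap s r),
     cand s (gmap s r) = Some b' & potS (round prefB s) r <= potS s (gmap s r)]).
Proof.
move=> Hinv Hcand; case: (Hinv) => H1 H2 H3 H4.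
case Hc: (cand s r) => [b0|].
  have [Hp Hh] := H1 _ _ Hc.
  have [Ep EC] := step_cand prefB Hinv Hc.
  move=> Hpos; left; split => //.
  move: Hpos; rewrite /potS /= Ep EC Hp (hd_w _ Hh).
  case: (msg_accept _ _ _ _) => // _.
  exact: hl2.
case Hp: (pr s r) => [b'|]; last first.
  have [Ep EC] := step_none prefB Hc Hp.
  have := Hcand r; rewrite Hc Hp /= => Hh.
  by rewrite /potS /= Ep EC; case: (Cl s r) Hh.
have [Ep EC] := step_pr prefB Hinv Hc Hp.
case Sb: (switches prefB s b'); last by rewrite /potS /= Ep Sb.
case Hbc: (bchoice prefB s b') => [r'|]; last first.
  by move: Sb; rewrite /switches Hbc eqxx andbF.
move=> Hpos; right; exists b'.
have Eg : gmap s r = r' by rewrite /gmap Hp Hbc.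
rewrite Eg; have Hc' := sw_cand Sb Hbc.
split => //.
have [Hp' Hh'] := H1 _ _ Hc'.
have Hh := H2 _ _ Hp.
rewrite /potS /= Ep EC Sb Hp' (hd_w _ Hh').
apply: leq_trans (hl2 (H3 r) Hh) _.
apply: (wblue Hbc).
- by apply: adjR; apply: (mem_subseq (H3 r)); apply: ohead_mem.
- by rewrite H4 Hp.
- by apply/eqP => Err; move: Hc'; rewrite -Err Hc.
Qed.

Lemma pot_mono s : Inv prefR s -> Cand s ->
  \sum_r potS (round prefB s) r <= \sum_r potS s r.
Proof.
move=> Hinv Hcand; case: (Hinv) => H1 H2 H3 H4.
set A := [set r | 0 < potS (round prefB s) r].
rewrite (bigID (fun r => r \in A)) /=.
rewrite [X in _ + X]big1 ?addn0; last first.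
  by move=> r; rewrite inE lt0n negbK => /eqP.
have inj : {in A &, injective (gmap s)}.
  move=> r1 r2; rewrite !inE => P1 P2 Eg.
  have acc : forall r1 r2, 0 < potS (round prefB s) r1 -> pr s r1 = None ->
      forall b', switches prefB s b' -> bchoice prefB s b' = Some (gmap s r2) ->
      cand s (gmap s r2) = Some b' -> gmap s r1 = gmap s r2 -> False.
    move=> x1 x2 Q1 Hp1 b' Sb Hb Hc Eg'.
    have E1 : gmap s x1 = x1 by rewrite /gmap Hp1.
    rewrite -Eg' E1 in Hb Hc.
    by move: Q1; rewrite (accepted_zero Hinv Hc Sb Hb).
  case: (gspec Hinv Hcand P1) => [[Hp1 _]|[b1 [Hp1 Sb1 Hb1 Hc1 _]]];
  case: (gspec Hinv Hcand P2) => [[Hp2 _]|[b2 [Hp2 Sb2 Hb2 Hc2 _]]].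
  - by move: Eg; rewrite /gmap Hp1 Hp2.
  - by case: (acc _ _ P1 Hp1 _ Sb2 Hb2 Hc2 Eg).
  - by case: (acc _ _ P2 Hp2 _ Sb1 Hb1 Hc1 (esym Eg)).
  - rewrite Eg Hc2 in Hc1; case: Hc1 => Eb; subst b2.
    have E1 : pb s b1 == Some r1 by rewrite H4 Hp1.
    have E2 : pb s b1 == Some r2 by rewrite H4 Hp2.
    by move: E1 E2 => /eqP -> /eqP [].
apply: (@leq_trans (\sum_(r in A) potS s (gmap s r))).
  apply: leq_sum => r; rewrite inE => P.
  by case: (gspec Hinv Hcand P) => [[Hp Hle]|[b [_ _ _ _ Hle]]] //; rewrite /gmap Hp.
rewrite -(big_imset _ inj) /=.
rewrite [X in _ <= X](bigID (fun r => r \in gmap s @: A)) /=.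
exact: leq_addr.
Qed.

End Weights.
Lemma Inv_st (R B : finType) (prefR : R -> seq B) (prefB : B -> seq R) j :
  Inv prefR (st prefR prefB j).
Proof.
elim: j => [|j IH]; first exact: Inv_init.
exact: (Inv_round prefB IH).
Qed.

Lemma loss_round (R B : finType) (adj : R -> B -> bool)
  (prefR : R -> seq B) (prefB : B -> seq R) (w : R -> B -> nat) j :
  valid_instance adj prefR prefB -> respects_prefs adj prefR prefB w ->
  wset w (lost prefR prefB j.+1) + potR prefR prefB w j.+2 <= wset w (lost prefR prefB j.+2).
Proof.
move=> Hv Hw.
set s := st prefR prefB j.+1.
have Hinv : Inv prefR s := Inv_st prefR prefB j.+1.
have Hcand : Cand s by move=> r.
case: (Hinv) => H1 H2 H3 H4.
have Hsub : forall r b, b \in new_C prefB s r -> b \in Cl s r.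
  by move=> r b; apply: mem_subseq; apply: newC_sub.
have memL : forall k r b, ((r,b) \in lost prefR prefB k) =
   (b \in prefR r) && (b \notin Cl (st prefR prefB k) r) by move=> *; rewrite inE.
have ClS : forall r, Cl (st prefR prefB j.+2) r = new_C prefB s r by [].
rewrite /wset [X in _ <= X](bigID (fun e => e \in lost prefR prefB j.+1)) /=.
apply: leq_add.
  apply: eq_leq; apply: eq_bigl => -[r b]; rewrite !memL ClS -/s.
  have hC : (b \in Cl s r) -> (b \in prefR r) := mem_subseq (H3 r) (x:=b).
  have hN := Hsub r b.
  move: hC hN; case: (b \in prefR r); case: (b \in Cl s r); case: (b \in new_C prefB s r);
    move=> /= hC hN; try done; first [by move: (hC isT) | by move: (hN isT)].
have -> : \sum_(e | (e \in lost prefR prefB j.+2) && (e \notin lost prefR prefB j.+1)) w e.1 e.2 =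
   \sum_r \sum_b (if (b \in Cl s r) && (b \notin new_C prefB s r) then w r b else 0).
  rewrite pair_big /= big_mkcond /=; apply: eq_bigr => -[r b] _ /=.
  rewrite !memL ClS -/s.
  have hC : (b \in Cl s r) -> (b \in prefR r) := mem_subseq (H3 r) (x:=b).
  have hN := Hsub r b.
  move: hC hN; case: (b \in prefR r); case: (b \in Cl s r); case: (b \in new_C prefB s r);
    move=> /= hC hN; try done; first [by move: (hC isT) | by move: (hN isT)].
apply: leq_sum => r _.
exact: (loss Hv Hw r Hinv Hcand).
Qed.

Lemma pot_round (R B : finType) (adj : R -> B -> bool)
  (prefR : R -> seq B) (prefB : B -> seq R) (w : R -> B -> nat) j :
  valid_instance adj prefR prefB -> respects_prefs adj prefR prefB w ->
  potR prefR prefB w j.+2 <= potR prefR prefB w j.+1.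
Proof.
move=> Hv Hw.
have Hinv : Inv prefR (st prefR prefB j.+1) := Inv_st prefR prefB j.+1.
have Hcand : Cand (st prefR prefB j.+1) by move=> r.
exact: (pot_mono Hv Hw Hinv Hcand).
Qed.

Theorem lemma4 (R B : finType) (adj : R -> B -> bool)
  (prefR : R -> seq B) (prefB : B -> seq R) (w : R -> B -> nat) :
  valid_instance adj prefR prefB ->
  respects_prefs adj prefR prefB w ->
  forall i : nat, 2 <= i ->
    (i - 1) * potR prefR prefB w i <= wset w (lost prefR prefB i).
Proof.
move=> Hv Hw [|[|k]] // _.
rewrite subSS subn0.
elim: k => [|k IH].
  rewrite mul1n; apply: leq_trans (loss_round 0 Hv Hw); exact: leq_addl.
apply: leq_trans (loss_round k.+1 Hv Hw).
rewrite mulSn addnC; apply: leq_add => //.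
apply: leq_trans IH; apply: leq_mul => //; exact: (pot_round k.+1 Hv Hw).
Qed.
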